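(* Let $n\to\infty$, $N=N(n)$ and $p=p(n)$ satisfy $np\ge \left(\log\frac Nn\right)/6$ and $N\ge 3n$. Then asymptotically almost surely, for every two disjoint sets $S,T\subseteq[N]$ with $|S|=|T|=n$, the number of edges of $G\sim G(N,p)$ contained in $S\cup T$ and having at least one endpoint in $S$ is at most $18n^2p$.
   Context: $G(N,p)$ denotes the Erdős–Rényi random graph on vertex set $[N]$ in which each pair is an edge independently with probability $p$. All logarithms are natural. ''Asymptotically almost surely'' means with probability tending to $1$ as $n\to\infty$. *)

(* Defs.v *)
From HB Require Import structures.
From mathcomp Require Import all_boot all_order all_algebra.
From mathcomp Require Import all_classical all_reals all_analysis.
Set Implicit Arguments. Unset Strict Implicit. Unset Printing Implicit Defensive.
Import Order.TTheory GRing.Theory Num.Theory.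
Local Open Scope ring_scope.

(* Potential edges of a simple graph on [N] = 'I_N: pairs (i,j) with i < j. *)
Definition gpairs (N : nat) : {set 'I_N * 'I_N} := [set e : 'I_N * 'I_N | (val e.1 < val e.2)%N].

(* Probability, under G(N,p), that the edge set E satisfies the event A.
   A graph is its edge set E \subset gpairs N; each potential edge is
   present independently with probability p. *)
Definition gnp_prob (R : realType) (N : nat) (p : R)
    (A : pred {set 'I_N * 'I_N}) : R :=
  \sum_(E in powerset (gpairs N) | A E)
     p ^+ #|E| * (1 - p) ^+ (#|gpairs N| - #|E|).

Definition edges_ST (N : nat) (E : {set 'I_N * 'I_N}) (S T : {set 'I_N}) :=
  [set e in E | [&& e.1 \in S :|: T, e.2 \in S :|: T & (e.1 \in S) || (e.2 \in S)]].

Definition good_event (R : realType) (n N : nat) (p : R) :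
    pred {set 'I_N * 'I_N} :=
  fun E => `[< forall S T : {set 'I_N}, [disjoint S & T] ->
            #|S| = n -> #|T| = n ->
            (#|edges_ST E S T|%:R <= 18 * (n%:R) ^+ 2 * p) >].

(* Main.v *)
Require Import Defs.
From HB Require Import structures.
From mathcomp Require Import all_boot all_order all_algebra.
From mathcomp Require Import all_classical all_reals all_analysis.
From mathcomp Require Import ring lra.
Import Order.TTheory GRing.Theory Num.Theory numFieldNormedType.Exports.
Local Open Scope ring_scope.

Lemma sum_subsets (R : comNzRingType) (I : finType) (G : {set I}) (phi : I -> bool -> R) :
  \sum_(E in powerset G) \prod_(i in G) phi i (i \in E) =
  \prod_(i in G) (phi i true + phi i false).
Proof.
rewrite [RHS]big_mkcond /=.
rewrite (eq_bigr (fun i => (if i \in G then phi i true else 0) +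
                           (if i \in G then phi i false else 1))); last first.
  by move=> i _; case: (i \in G); rewrite ?add0r.
rewrite bigA_distr [RHS](bigID (fun J : {set I} => J \subset G)) /=.
rewrite [X in _ + X]big1 ?addr0; last first.
  move=> J; move/subsetPn => [i iJ iG].
  by rewrite (bigD1 i) //= iJ (negbTE iG) mul0r.
apply: eq_big => [J|J]; first by rewrite powersetE.
rewrite powersetE => sJG.
rewrite big_mkcond; apply: eq_bigr => i _.
case iG: (i \in G); first by case: (i \in J).
by have -> : (i \in J) = false by apply/negP => /(fintype.subsetP sJG); rewrite iG.
Qed.

Lemma weight_prod (R : comNzRingType) (I : finType) (G F E : {set I}) (p x : R) :
  E \subset G ->
  p ^+ #|E| * (1 - p) ^+ (#|G| - #|E|) * x ^+ #|E :&: F| =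
  \prod_(i in G) (if i \in E then p * (if i \in F then x else 1) else 1 - p).
Proof.
move=> sEG.
rewrite (eq_bigr (fun i => (if i \in E then p else 1) *
   (if (i \in E) && (i \in F) then x else 1) * (if ~~ (i \in E) then 1 - p else 1))); last first.
  by move=> i _; case: (i \in E); case: (i \in F); rewrite /= ?mulr1 ?mul1r.
rewrite !big_split /= -!big_mkcondr /=.
have -> : \prod_(i in G | i \in E) p = p ^+ #|E|.
  rewrite -prodr_const; apply: eq_bigl => i /=.
  by apply/andP/idP => [[] //|iE]; split => //; exact: (fintype.subsetP sEG).
have -> : \prod_(i in G | (i \in E) && (i \in F)) x = x ^+ #|E :&: F|.
  rewrite -prodr_const; apply: eq_bigl => i /=; rewrite inE.
  case iE: (i \in E) => //=; last by rewrite andbF.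
  by rewrite (fintype.subsetP sEG i iE).
have -> : \prod_(i in G | ~~ (i \in E)) (1 - p) = (1 - p) ^+ #|G :\: E|.
  by rewrite -prodr_const; apply: eq_bigl => i /=; rewrite !inE andbC.
rewrite cardsD (finset.setIidPr sEG).
by rewrite [RHS]mulrAC.
Qed.

Lemma mgf (R : comNzRingType) (I : finType) (G F : {set I}) (p x : R) :
  \sum_(E in powerset G) p ^+ #|E| * (1 - p) ^+ (#|G| - #|E|) * x ^+ #|E :&: F| =
  (1 - p + p * x) ^+ #|G :&: F|.
Proof.
transitivity (\sum_(E in powerset G) \prod_(i in G)
    (fun i b => if b then p * (if i \in F then x else 1) else 1 - p) i (i \in E)).
  by apply: eq_bigr => E; rewrite powersetE => sEG; apply: weight_prod.
rewrite (@sum_subsets R I G (fun i b => if b then p * (if i \in F then x else 1) else 1 - p)) /=.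
rewrite (eq_bigr (fun i => if i \in F then 1 - p + p * x else 1)); last first.
  by move=> i _; case: (i \in F); rewrite ?mulr1 addrC // subrK.
rewrite -prodr_const big_mkcond [RHS]big_mkcond /=.
by apply: eq_bigr => i _; rewrite inE; case: (i \in G); case: (i \in F).
Qed.

Definition FST (N : nat) (S T : {set 'I_N}) : {set 'I_N * 'I_N} :=
  [set e : 'I_N * 'I_N | [&& e.1 \in S :|: T, e.2 \in S :|: T & (e.1 \in S) || (e.2 \in S)]].

Arguments FST {N}.

Lemma edges_STE N (E : {set 'I_N * 'I_N}) S T : edges_ST E S T = E :&: FST S T.
Proof. by apply/setP => e; rewrite !inE. Qed.

Lemma card_FST N (S T : {set 'I_N}) n : [disjoint S & T] -> #|S| = n -> #|T| = n ->
  (2 * #|gpairs N :&: FST S T| <= 3 * (n * n))%N.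
Proof.
move=> dST cS cT.
set A := gpairs N :&: FST S T.
pose sw := fun e : 'I_N * 'I_N => (e.2, e.1).
have swK : involutive sw by case.
set B := sw @: A.
have cB : #|B| = #|A| by rewrite card_imset //; exact: inv_inj.
have dAB : [disjoint A & B].
  rewrite disjoint_subset; apply/fintype.subsetP => e; rewrite !inE => /andP[lt12 _].
  apply/negP => /imsetP[f].
  rewrite !inE => /andP[lt12' _] eE; rewrite eE /sw /= in lt12.
  by move: (ltn_trans lt12 lt12'); rewrite ltnn.
set U := S :|: T.
have cU : #|U| = (2 * n)%N.
  by rewrite cardsU (disjoint_setI0 dST) cards0 subn0 cS cT mul2n addnn.
have sub : A :|: B \subset finset.setX U U :\: finset.setX T T.
  have key : forall a b : 'I_N, (a \in S) || (a \in T) -> (b \in S) || (b \in T) -> (a \in S) || (b \in S) ->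
      ((a, b) \in finset.setX U U :\: finset.setX T T) && ((b, a) \in finset.setX U U :\: finset.setX T T).
    move=> a b aU bU abS; rewrite !inE -!/(is_true _).
    have dj : forall c, (c \in S) && (c \in T) = false.
      move=> c; apply/negP => /andP[cS' cT'].
      by move: dST => /disjointFr/(_ cS'); rewrite cT'.
    move: aU bU abS (dj a) (dj b).
    by rewrite /=; case: (a \in S); case: (a \in T); case: (b \in S); case: (b \in T).
  apply/fintype.subsetP => -[a b]; rewrite inE => /orP[].
    rewrite !inE => /andP[_ /and3P[e1 e2 e12]].
    by case/andP: (key a b e1 e2 e12) => h _; move: h; rewrite !inE.
  move=> /imsetP[f]; rewrite !inE => /andP[_ /and3P[e1 e2 e12]] ->.
  case: f e1 e2 e12 => a' b' /= e1 e2 e12.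
  by case/andP: (key a' b' e1 e2 e12) => _ h; move: h; rewrite !inE.
have := subset_leq_card sub.
rewrite cardsU (disjoint_setI0 dAB) cards0 subn0 cB cardsD.
rewrite (finset.setIidPr _); last first.
  apply/fintype.subsetP => e; rewrite !inE => /andP[e1 e2].
  by rewrite e1 e2 !orbT.
move=> h; move: (cardsX U U) (cardsX T T); rewrite cU cT.
move=> eU eT; move: h; rewrite eU eT.
have -> : (2 * n * (2 * n) = 3 * (n * n) + n * n)%N by ring.
by rewrite addnK mul2n addnn.
Qed.
Lemma e_le (R : realType) : expR 1 <= (6/5) ^+ 6 :> R.
Proof.
have h1 : 5/6 <= expR (-(1/6)) :> R.
  have := expR_ge1Dx (-(1/6) : R); lra.
have h2 : expR (1/6) <= 6/5 :> R.
  have h3 := expRxMexpNx_1 (1/6 : R).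
  have h4 := expR_gt0 (1/6 : R).
  nra.
have -> : (1 : R) = 1/6 * 6%:R by field.
rewrite expRM_natr.
apply: lerXn2r; rewrite ?nnegrE ?expR_ge0 //; lra.
Qed.

Lemma e2_lt9 (R : realType) : expR 2 < 9 :> R.
Proof.
have -> : (2 : R) = 1 * 2%:R by rewrite mul1r.
rewrite expRM_natr expr2.
have h6 : (6/5) ^+ 6 < 3 :> R by lra.
have := e_le R; have := expR_gt0 (1 : R); nra.
Qed.

Lemma binom_le (R : realType) (N n : nat) : (0 < n)%N -> (n <= N)%N ->
  'C(N, n)%:R <= expR n%:R * (N%:R / n%:R) ^+ n :> R.
Proof.
move=> n0 nN.
have N0 : (0 < N)%N by apply: leq_trans nN.
have nR : 0 < n%:R :> R by rewrite ltr0n.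
have NR : 0 < N%:R :> R by rewrite ltr0n.
set x : R := n%:R / N%:R.
have hx : 0 < x by rewrite /x divr_gt0.
have h1 : 'C(N, n)%:R * x ^+ n <= (x + 1) ^+ N.
  rewrite exprD1n.
  have nN1 : (n < N.+1)%N by rewrite ltnS.
  have hs : 0 <= \sum_(i < N.+1 | i != Ordinal nN1) x ^+ i *+ 'C(N, i).
    apply: sumr_ge0 => i _.
    by rewrite mulrn_wge0 // exprn_ge0 // ltW.
  rewrite (bigD1 (Ordinal nN1)) // mulrC mulr_natr.
  exact: ler_wpDr hs (lexx _).
have h2 : (x + 1) ^+ N <= expR n%:R.
  have -> : (n%:R : R) = x * N%:R by rewrite /x mulfVK // gt_eqF.
  rewrite expRM_natr; apply: lerXn2r; rewrite ?nnegrE ?expR_ge0 //.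
    by rewrite addr_ge0 // ltW.
  by rewrite addrC expR_ge1Dx.
have -> : (N%:R / n%:R : R) = x^-1 by rewrite /x invf_div.
rewrite exprVn.
rewrite ler_pdivlMr ?exprn_gt0 //.
exact: le_trans h1 h2.
Qed.

Lemma pair_bound (R : realType) N (p : R) n (S T : {set 'I_N}) :
  0 <= p <= 1 -> [disjoint S & T] -> #|S| = n -> #|T| = n ->
  \sum_(E in powerset (gpairs N) | 18 * n%:R ^+ 2 * p < #|edges_ST E S T|%:R)
     p ^+ #|E| * (1 - p) ^+ (#|gpairs N| - #|E|)
  <= expR (- ((36 - 3/2 * (expR 2 - 1)) * (n%:R ^+ 2 * p))).
Proof.
move=> /andP[p0 p1] dST cS cT.
set G := gpairs N; set F := FST S T; set t := 18 * n%:R ^+ 2 * p.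
have w0 : forall E : {set 'I_N * 'I_N}, 0 <= p ^+ #|E| * (1 - p) ^+ (#|G| - #|E|).
  by move=> E; rewrite mulr_ge0 // exprn_ge0 // subr_ge0.
apply: (@le_trans _ _ (\sum_(E in powerset G)
   p ^+ #|E| * (1 - p) ^+ (#|G| - #|E|) * expR (2 * (#|E :&: F|%:R - t)))).
  rewrite big_mkcondr /=; apply: ler_sum => E _.
  rewrite edges_STE; case: ifP => h.
    rewrite -{1}(mulr1 (_ * _)); apply: ler_wpM2l => //.
    apply: le_trans (expR_ge1Dx _); rewrite lerDl.
    by apply: mulr_ge0 => //; rewrite subr_ge0 ltW.
  by apply: mulr_ge0; [exact: w0 | exact: expR_ge0].
have -> : \sum_(E in powerset G)
   p ^+ #|E| * (1 - p) ^+ (#|G| - #|E|) * expR (2 * (#|E :&: F|%:R - t)) =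
   expR (- (2 * t)) * \sum_(E in powerset G)
   p ^+ #|E| * (1 - p) ^+ (#|G| - #|E|) * expR 2 ^+ #|E :&: F|.
  rewrite big_distrr /=; apply: eq_bigr => E _.
  rewrite mulrDr mulrN expRD -expRM_natr; ring.
rewrite mgf.
have e21 : 1 <= expR 2 :> R by have := expR_ge1Dx (2 : R); lra.
have hk : (#|G :&: F|%:R : R) <= 3/2 * n%:R ^+ 2.
  have := @card_FST N S T n dST cS cT; rewrite -(ler_nat R) !natrM -/G -/F => h.
  lra.
apply: (@le_trans _ _ (expR (- (2 * t)) * expR (p * (expR 2 - 1) * (3/2 * n%:R ^+ 2)))).
  apply: ler_wpM2l; first exact: expR_ge0.
  apply: (@le_trans _ _ (expR (p * (expR 2 - 1)) ^+ #|G :&: F|)).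
    apply: lerXn2r; rewrite ?nnegrE ?expR_ge0 //.
      nra.
    by have := expR_ge1Dx (p * (expR 2 - 1)); lra.
  rewrite -expRM_natr ler_expR; apply: ler_wpM2l => //.
  by rewrite mulr_ge0 // subr_ge0.
rewrite -expRD ler_expR /t; lra.
Qed.

Lemma final_ineq (R : realType) (N n : nat) (p : R) : (0 < n)%N -> (3 * n <= N)%N ->
  0 <= p -> ln (N%:R / n%:R) / 6 <= n%:R * p ->
  'C(N, n)%:R ^+ 2 * expR (- ((36 - 3/2 * (expR 2 - 1)) * (n%:R ^+ 2 * p)))
  <= expR (- (((36 - 3/2 * (expR 2 - 1)) / 6 - 4) * n%:R)) :> R.
Proof.
move=> n0 nN p0 hL.
set c : R := 36 - 3/2 * (expR 2 - 1).
have c24 : 24 < c by have := e2_lt9 R; rewrite /c; lra.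
have nR : 0 < n%:R :> R by rewrite ltr0n.
set r : R := N%:R / n%:R.
have r3 : 3 <= r.
  rewrite /r ler_pdivlMr //.
  have : ((3 * n)%:R <= N%:R :> R) by rewrite ler_nat.
  by rewrite natrM.
have r0 : 0 < r by apply: lt_le_trans r3; lra.
set L := ln r.
have L1 : 1 <= L.
  rewrite -[X in X <= _](expRK 1) /L ler_ln ?posrE ?expR_gt0 //.
  have := e_le R; have : (6/5) ^+ 6 < 3 :> R by lra.
  lra.
have nN' : (n <= N)%N.
  by apply: leq_trans nN; rewrite leq_pmull.
have hC : 'C(N, n)%:R <= expR (n%:R + L * n%:R) :> R.
  apply: (le_trans (@binom_le R N n n0 nN')).
  by rewrite -/r -[X in X ^+ _](lnK r0) -expRM_natr -expRD.
have hC2 : 'C(N, n)%:R ^+ 2 <= expR (2 * (n%:R + L * n%:R)) :> R.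
  rewrite (mulrC 2) (_ : (2 : R) = 2%:R) // expRM_natr.
  by apply: lerXn2r; rewrite ?nnegrE ?ler0n ?expR_ge0.
apply: (le_trans (ler_wpM2r (expR_ge0 _) hC2)).
rewrite -expRD ler_expR.
have h1 : c * n%:R * (L / 6) <= c * n%:R * (n%:R * p).
  by apply: ler_wpM2l => //; apply: mulr_ge0 => //; lra.
have h2 : 0 <= (c / 6 - 2) * ((L - 1) * n%:R).
  by apply: mulr_ge0; [lra | apply: mulr_ge0; lra].
rewrite -/L in hL.
lra.
Qed.

Definition bad (R : realType) (n N : nat) (p : R) (S T : {set 'I_N}) (E : {set 'I_N * 'I_N}) :=
  [disjoint S & T] && (18 * n%:R ^+ 2 * p < #|edges_ST E S T|%:R).

Lemma prob_le1 (R : realType) (N n : nat) (p : R) : 0 <= p <= 1 ->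
  @gnp_prob R N p (@good_event R n N p) <= 1 /\
  1 - @gnp_prob R N p (@good_event R n N p) =
  \sum_(E in powerset (gpairs N))
     p ^+ #|E| * (1 - p) ^+ (#|gpairs N| - #|E|) * (~~ @good_event R n N p E)%:R.
Proof.
move=> /andP[p0 p1].
set G := gpairs N.
have w0 : forall E : {set 'I_N * 'I_N}, 0 <= p ^+ #|E| * (1 - p) ^+ (#|G| - #|E|).
  by move=> E; apply: mulr_ge0; apply: exprn_ge0; rewrite ?subr_ge0.
have tot : \sum_(E in powerset G) p ^+ #|E| * (1 - p) ^+ (#|G| - #|E|) = 1.
  have h := @mgf R _ G finset.set0 p 1; rewrite mulr1 subrK expr1n in h.
  by apply: etrans h; apply: eq_bigr => E _; rewrite expr1n mulr1.
rewrite /gnp_prob -/G big_mkcondr /=; split.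
  rewrite -[X in _ <= X]tot; apply: ler_sum => E _.
  by case: ifP => _ //; apply: w0.
rewrite -[X in X - _]tot -sumrB; apply: eq_bigr => E _.
by case: (@good_event R n N p E); rewrite /= ?mulr0 ?mulr1 ?subrr ?subr0.
Qed.

Lemma fail_bound (R : realType) (N n : nat) (p : R) : 0 <= p <= 1 ->
  \sum_(E in powerset (gpairs N))
     p ^+ #|E| * (1 - p) ^+ (#|gpairs N| - #|E|) * (~~ @good_event R n N p E)%:R
  <= 'C(N, n)%:R ^+ 2 * expR (- ((36 - 3/2 * (expR 2 - 1)) * (n%:R ^+ 2 * p))).
Proof.
move=> hp; have /andP[p0 p1] := hp.
set G := gpairs N; set K := expR _.
set SS := [set S : {set 'I_N} | #|S| == n].
set w := fun E : {set 'I_N * 'I_N} => p ^+ #|E| * (1 - p) ^+ (#|G| - #|E|).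
have w0 : forall E, 0 <= w E.
  by move=> E; apply: mulr_ge0; apply: exprn_ge0; rewrite ?subr_ge0.
set cnt := fun E => (\sum_(S in SS) \sum_(T in SS) (@bad R n N p S T E : nat))%N.
apply: (@le_trans _ _ (\sum_(E in powerset G) w E * (cnt E)%:R)).
  apply: ler_sum => E _; apply: ler_wpM2l; first exact: w0.
  case g: (@good_event R n N p E); first by rewrite /= ler0n.
  rewrite /= ler1n lt0n; apply/negP => /eqP c0.
  move/negbT: g => /negP; apply; apply/asboolP => S T dST cS cT.
  have hb : @bad R n N p S T E = false.
    apply/negP => hb.
    have : (1 <= cnt E)%N.
      rewrite /cnt (bigD1 S) ?inE ?cS //= (bigD1 T) ?inE ?cT //= hb.
      exact: leq_trans (leq_addr _ _) (leq_addr _ _).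
    by rewrite c0.
  by move: hb; rewrite /bad dST /= => /negbT; rewrite -leNgt.
have -> : \sum_(E in powerset G) w E * (cnt E)%:R =
    \sum_(S in SS) \sum_(T in SS) \sum_(E in powerset G) w E * (@bad R n N p S T E)%:R.
  transitivity (\sum_(E in powerset G) \sum_(S in SS) \sum_(T in SS)
      w E * (@bad R n N p S T E)%:R).
    apply: eq_bigr => E _; rewrite /cnt natr_sum big_distrr; apply: eq_bigr => S _.
    by rewrite natr_sum big_distrr.
  rewrite exchange_big; apply: eq_bigr => S _; exact: exchange_big.
apply: (@le_trans _ _ (\sum_(S in SS) \sum_(T in SS) K)).
  apply: ler_sum => S; rewrite inE => /eqP cS; apply: ler_sum => T; rewrite inE => /eqP cT.
  case dST: [disjoint S & T]; last first.
    rewrite big1 ?expR_ge0 // => E _.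
    by rewrite /bad dST /= mulr0.
  apply: le_trans (@pair_bound R N p n S T hp dST cS cT).
  rewrite big_mkcondr /=; apply: ler_sum => E _; rewrite /bad dST /= /w.
  by case: ifP; rewrite ?mulr1 ?mulr0.
have cSS : #|SS| = 'C(N, n) by rewrite card_draws card_ord.
by rewrite sumr_const sumr_const -mulrnA cSS -[K *+ _]mulr_natl natrM expr2.
Qed.

Local Open Scope classical_set_scope.
Local Open Scope ring_scope.

Theorem lemma2p5 (R : realType) (N : nat -> nat) (p : nat -> R) :
  (forall n, 0 <= p n <= 1) ->
  (forall n, (3 * n <= N n)%N) ->
  (forall n, (0 < n)%N -> ln ((N n)%:R / n%:R) / 6 <= n%:R * p n) ->
  (fun n => @gnp_prob R (N n) (p n) (@good_event R n (N n) (p n))) @ \oo --> (1 : R).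
Proof.
move=> hp hN hL.
set c : R := 36 - 3/2 * (expR 2 - 1).
set d : R := c / 6 - 4.
have d0 : 0 < d by have := e2_lt9 R; rewrite /d /c; lra.
set q : R := expR (- d).
have q1 : `|q| < 1 by rewrite ger0_norm ?expR_ge0 // expR_lt1 oppr_lt0.
apply: (@squeeze_cvgr _ _ _ _ (fun n => 1 - q ^+ n) (fun _ => 1)).
- exists 1%N => // n /= n1.
  have [hle heq] := @prob_le1 R (N n) n (p n) (hp n).
  apply/andP; split => //.
  have hf := @fail_bound R (N n) n (p n) (hp n).
  have hp0 : 0 <= p n by case/andP: (hp n).
  have hfi := @final_ineq R (N n) n (p n) n1 (hN n) hp0 (hL n n1).
  have -> : q ^+ n = expR (- (((36 - 3/2 * (expR 2 - 1)) / 6 - 4) * n%:R)).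
    by rewrite /q -expRM_natr mulNr.
  rewrite lerBlDr addrC -lerBlDr heq.
  exact: le_trans hf hfi.
- rewrite -[X in _ --> X]subr0; apply: cvgB; [exact: cvg_cst | exact: cvg_expr].
- exact: cvg_cst.
Qed.
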